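(* Let $X$ be a complex Banach space with open unit ball $B$, let $H(B)$ be a uniform algebra with $A_u(B)\subseteq H(B)\subseteq H^\infty(B)$, and let $x^{**}\in\bar B^{**}$. Then $Cl_B(f,x^{**})=\hat f(M_{x^{**}})$ for all $f\in H(B)$ if and only if the following holds: for every finite family $f_1,\dots,f_{n-1}\in A(B)$ and $f_n\in H(B)$ for which there is $\delta>0$ with $|f_1(x)|+\dots+|f_n(x)|\ge\delta$ for all $x\in B$, the functions $\hat f_1,\dots,\hat f_n$ have no common zero in $M_{x^{**}}$.
   Context: $H^\infty(B)$: bounded holomorphic functions on $B$ with sup norm; $A(B)$: closed subalgebra of $H^\infty(B)$ generated by $1$ and the restrictions to $B$ of $X^*$; $A_u(B)$: uniformly continuous holomorphic functions on $B$; a uniform algebra between $A_u(B)$ and $H^\infty(B)$ is a closed unital subalgebra of $H^\infty(B)$ containing $A_u(B)$. $M_{H(B)}$ is its spectrum, $\hat f$ the Gelfand transform. $\bar B^{**}$ is the closed unit ball of $X^{**}$. Cluster set: $Cl_B(f,x^{**})=\{\lambda:\exists\text{ net }(x_\alpha)\subset B,\ x_\alpha\to x^{**}\text{ weak-star},\ f(x_\alpha)\to\lambda\}$. Fiber: $M_{x^{**}}=\{\tau\in M_{H(B)}:\tau(L)=x^{**}(L)\ \forall L\in X^*\}$. *)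

(* Defs.v *)
From HB Require Import structures.
From mathcomp Require Import all_boot all_order all_algebra.
From mathcomp Require Import complex.
From mathcomp Require Import all_classical all_reals all_analysis.
Set Implicit Arguments. Unset Strict Implicit. Unset Printing Implicit Defensive.
Import Order.TTheory GRing.Theory Num.Theory.
Import numFieldTopology.Exports numFieldNormedType.Exports.
Local Open Scope ring_scope.
Local Open Scope complex_scope.

Section Defs.
Variables (R : realType).
Local Notation C := (R[i]).
Variable (X : completeNormedModType C).

Definition ball1 := {x : X | `|x| < 1}.

Definition is_dual (L : X -> C) : Prop :=
  (forall (a : C) (x y : X), L (a *: x + y) = a * L x + L y) /\ continuous (L : X -> C^o).

(** elements of the closed unit ball of X^** : C-linear functionals on X^*
    of norm <= 1 (only their values on X^* matter) *)
Definition in_bidual_ball (xss : (X -> C) -> C) : Prop :=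
  (forall (a : C) (L1 L2 : X -> C), is_dual L1 -> is_dual L2 ->
      xss (fun x => a * L1 x + L2 x) = a * xss L1 + xss L2) /\
  (forall (L : X -> C) (c : C), is_dual L -> 0 <= c ->
      (forall x, `|L x| <= c * `|x|) -> `|xss L| <= c).

Definition holomorphic (f : ball1 -> C) : Prop :=
  forall b : ball1, exists L : X -> C, is_dual L /\
    forall eps : C, 0 < eps -> exists2 delta : C, 0 < delta &
      forall b' : ball1, `|val b' - val b| < delta ->
        `|f b' - f b - L (val b' - val b)| <= eps * `|val b' - val b|.

Definition Hinf (f : ball1 -> C) : Prop :=
  holomorphic f /\ exists M : C, forall b, `|f b| <= M.

Definition Au (f : ball1 -> C) : Prop :=
  holomorphic f /\
  forall eps : C, 0 < eps -> exists2 delta : C, 0 < delta &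
    forall b b' : ball1, `|val b - val b'| < delta -> `|f b - f b'| < eps.

Inductive polyX : (ball1 -> C) -> Prop :=
  | polyX_cst (c : C) : polyX (fun _ => c)
  | polyX_dual (L : X -> C) : is_dual L -> polyX (fun b => L (val b))
  | polyX_add f g : polyX f -> polyX g -> polyX (fun b => f b + g b)
  | polyX_mul f g : polyX f -> polyX g -> polyX (fun b => f b * g b).

Definition AB (f : ball1 -> C) : Prop :=
  forall eps : C, 0 < eps -> exists2 p, polyX p & forall b, `|f b - p b| <= eps.

Definition uniform_algebra_between (H : (ball1 -> C) -> Prop) : Prop :=
  (forall f, H f -> Hinf f) /\ (forall f, Au f -> H f) /\
  H (fun _ => 1) /\
  (forall (a : C) f g, H f -> H g -> H (fun b => a * f b + g b)) /\
  (forall f g, H f -> H g -> H (fun b => f b * g b)) /\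
  (forall f, (forall eps : C, 0 < eps -> exists2 g, H g &
                 forall b, `|f b - g b| <= eps) -> H f).

(** spectrum M_{H(B)}: nonzero multiplicative C-linear functionals on H(B);
    the Gelfand transform of f is tau |-> tau f *)
Definition spectrum (H : (ball1 -> C) -> Prop) (tau : (ball1 -> C) -> C) : Prop :=
  (forall (a : C) f g, H f -> H g -> tau (fun b => a * f b + g b) = a * tau f + tau g) /\
  (forall f g, H f -> H g -> tau (fun b => f b * g b) = tau f * tau g) /\
  (exists2 f, H f & tau f != 0).

Definition fiber (H : (ball1 -> C) -> Prop) (xss : (X -> C) -> C)
    (tau : (ball1 -> C) -> C) : Prop :=
  spectrum H tau /\ forall L, is_dual L -> tau (fun b => L (val b)) = xss L.

Definition directed (I : Type) (le : I -> I -> Prop) : Prop :=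
  (exists i : I, True) /\ (forall i, le i i) /\
  (forall i j k, le i j -> le j k -> le i k) /\
  (forall i j, exists k, le i k /\ le j k).

Definition net_cvg (I : Type) (le : I -> I -> Prop) (u : I -> C) (l : C) : Prop :=
  forall eps : C, 0 < eps -> exists i0, forall i, le i0 i -> `|u i - l| < eps.

Definition cluster_set (f : ball1 -> C) (xss : (X -> C) -> C) (lam : C) : Prop :=
  exists (I : Type) (le : I -> I -> Prop) (x : I -> ball1),
    directed le /\
    (forall L, is_dual L -> net_cvg le (fun i => L (val (x i))) (xss L)) /\
    net_cvg le (fun i => f (x i)) lam.

End Defs.

(* Main.v *)
Require Import Defs.
From HB Require Import structures.
From mathcomp Require Import all_boot all_order all_algebra.
From mathcomp Require Import complex.
From mathcomp Require Import all_classical all_reals all_analysis.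
From mathcomp Require Import ring.
Import Order.TTheory GRing.Theory Num.Theory.
Import numFieldTopology.Exports numFieldNormedType.Exports.
Set Implicit Arguments. Unset Strict Implicit. Unset Printing Implicit Defensive.
Local Open Scope classical_set_scope.
Local Open Scope ring_scope.
Local Open Scope complex_scope.

Definition Cn (R : realType) : numFieldType := R[i].
Section Basics.
Variables (R : realType) (X : completeNormedModType R[i]).
Local Notation C := (R[i]).
Local Notation B := (ball1 X).

Lemma dual0 (L : X -> C) : is_dual L -> L 0 = 0.
Proof.
case=> lin _; have := lin 1 0 0; rewrite scale1r addr0 mul1r => /esym/eqP.
by rewrite -subr_eq0 addrK => /eqP ->.
Qed.

Lemma dualD (L : X -> C) x y : is_dual L -> L (x + y) = L x + L y.
Proof. by move=> [lin _]; have := lin 1 x y; rewrite scale1r mul1r. Qed.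

Lemma dualZ (L : X -> C) a x : is_dual L -> L (a *: x) = a * L x.
Proof. move=> hL; case: (hL) => lin _; have := lin a x 0; by rewrite !addr0 dual0 // addr0. Qed.

Lemma dualB (L : X -> C) x y : is_dual L -> L (x - y) = L x - L y.
Proof.
move=> hL; rewrite dualD // -scaleN1r dualZ //.
by rewrite mulN1r.
Qed.

Lemma dual_Au (L : X -> C) : is_dual L -> Au (fun b : B => L (val b)).
Proof.
move=> hL; split.
  move=> b; exists L; split => // eps eps0; exists 1 => // b' _.
  rewrite -dualB // subrr normr0 mulr_ge0 ?normr_ge0 //; exact: ltW.
move=> eps eps0.
case: (hL) => _ hc; have := hc 0.
move=> /cvgrPdist_lt /(_ eps eps0); rewrite dual0 //.
rewrite nearE => /nbhs_normP [d /= d0 Hd].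
exists d => // b b' hbb'.
rewrite -dualB //; have := Hd (val b - val b').
rewrite /ball_ /= sub0r normrN => /(_ hbb').
by rewrite sub0r normrN.
Qed.

Lemma cst_Au (c : C) : Au (fun _ : B => c).
Proof.
split.
  move=> b; exists (fun _ => 0); split.
    split; first by move=> *; rewrite mulr0 addr0.
    by move=> x; exact: cvg_cst.
  move=> eps eps0; exists 1 => // b' _.
  rewrite subrr subr0 normr0 mulr_ge0 ?normr_ge0 //; exact: ltW.
by move=> eps eps0; exists 1 => // b b' _; rewrite subrr normr0.
Qed.

End Basics.

Section Alg.
Variables (R : realType) (X : completeNormedModType R[i]).
Local Notation C := (R[i]).
Local Notation B := (ball1 X).
Variable H : (B -> C) -> Prop.
Hypothesis UA : uniform_algebra_between H.

Lemma H_ext f g : H f -> (forall b, f b = g b) -> H g.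
Proof. by move=> Hf e; have -> : g = f by apply/funext => b; rewrite e. Qed.

Lemma H_Au f : Au f -> H f.
Proof. by case: UA => _ [+ _]; apply. Qed.

Lemma H_cst c : H (fun _ => c).
Proof. exact/H_Au/cst_Au. Qed.

Lemma H_lin a f g : H f -> H g -> H (fun b => a * f b + g b).
Proof. by case: UA => _ [_ [_ [+ _]]]; apply. Qed.

Lemma H_add f g : H f -> H g -> H (fun b => f b + g b).
Proof. by move=> Hf Hg; eapply H_ext; [exact: (H_lin 1 Hf Hg)|move=> b /=; rewrite mul1r]. Qed.

Lemma H_mul f g : H f -> H g -> H (fun b => f b * g b).
Proof. by case: UA => _ [_ [_ [_ [+ _]]]]; apply. Qed.

Lemma H_closed f : (forall eps : C, 0 < eps -> exists2 g, H g &
                 forall b, `|f b - g b| <= eps) -> H f.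
Proof. by case: UA => _ [_ [_ [_ [_ +]]]]; apply. Qed.

Lemma H_Hinf f : H f -> Hinf f.
Proof. by case: UA => + _; apply. Qed.

Lemma H_dual L : is_dual L -> H (fun b : B => L (val b)).
Proof. by move=> hL; apply/H_Au/dual_Au. Qed.

Lemma polyX_H p : Defs.polyX p -> H p.
Proof.
elim=> [c|L hL|f g _ Hf _ Hg|f g _ Hf _ Hg].
- exact: H_cst.
- exact: H_dual.
- exact: H_add.
- exact: H_mul.
Qed.

Lemma AB_H f : AB f -> H f.
Proof.
move=> hf; apply: H_closed => eps eps0.
by have [p /polyX_H Hp hp] := hf eps eps0; exists p.
Qed.

Section Tau.
Variable tau : (B -> C) -> C.
Hypothesis Stau : spectrum H tau.

Lemma tau_lin a f g : H f -> H g -> tau (fun b => a * f b + g b) = a * tau f + tau g.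
Proof. by case: Stau => + _; apply. Qed.

Lemma tau_mul f g : H f -> H g -> tau (fun b => f b * g b) = tau f * tau g.
Proof. by case: Stau => _ [+ _]; apply. Qed.

Lemma tau_ext f g : (forall b, f b = g b) -> tau f = tau g.
Proof. by move=> e; have -> : g = f by apply/funext => b; rewrite e. Qed.

Lemma tau_add f g : H f -> H g -> tau (fun b => f b + g b) = tau f + tau g.
Proof.
move=> Hf Hg; rewrite -[tau f]mul1r -tau_lin //.
by apply: tau_ext => b; rewrite mul1r.
Qed.

Lemma tau1 : tau (fun _ => 1) = 1.
Proof.
case: Stau => _ [_ [f Hf nz]].
have e : tau f = tau f * tau (fun _ => 1).
  by rewrite -tau_mul //; [apply: tau_ext => b /=; exact: (esym (mulr1 _))|exact: H_cst].
by apply: (mulfI nz); rewrite mulr1 -e.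
Qed.

Lemma tau_cst c : tau (fun _ => c) = c.
Proof.
have := tau_lin (c - 1) (H_cst 1) (H_cst 1).
rewrite mulr1 subrK tau1 => ->.
exact: (etrans (congr1 (fun x => x + 1) (mulr1 _)) (subrK _ _)).
Qed.

Lemma tau_sub f g : H f -> H g -> tau (fun b => f b - g b) = tau f - tau g.
Proof.
move=> Hf Hg; have := tau_lin (-1) Hg Hf; rewrite mulN1r addrC => <-.
by apply: tau_ext => b; rewrite mulN1r addrC.
Qed.

End Tau.
End Alg.

Section Nets.
Variables (R : realType).
Local Notation C := (R[i]).

Definition tailF (I : Type) (le : I -> I -> Prop) : set_system I :=
  fun A => exists i0, forall i, le i0 i -> A i.

Lemma tailF_proper (I : Type) (le : I -> I -> Prop) :
  directed le -> ProperFilter (tailF le).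
Proof.
move=> [[i0 _] [lerr [letr leub]]].
apply: Build_ProperFilter_ex.
  by move=> A [j hj]; exists j; apply: hj; exact: lerr.
split.
- by exists i0.
- move=> A B' [i hi] [j hj]; have [k [ik jk]] := leub i j.
  by exists k => l kl; split; [apply: hi|apply: hj]; apply: letr kl.
- by move=> A B' AB [i hi]; exists i => l il; apply: AB; apply: hi.
Qed.

Lemma net_cvgP (I : Type) (le : I -> I -> Prop) (u : I -> C) (l : C) :
  directed le -> net_cvg le u l <-> ((fun i => u i : Cn R) @ tailF le --> (l : Cn R)).
Proof.
move=> dle; have PF := tailF_proper dle.
split.
  move=> h; apply/cvgrPdist_lt => eps eps0.
  have [i0 hi0] := h eps eps0; exists i0 => i /hi0; by rewrite distrC.
move=> /cvgrPdist_lt h eps eps0; have [i0 hi0] := h eps eps0.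
by exists i0 => i /hi0; rewrite distrC.
Qed.

End Nets.

Section Forward.
Variables (R : realType) (X : completeNormedModType R[i]).
Local Notation C := (R[i]).
Local Notation B := (ball1 X).
Variable H : (B -> C) -> Prop.
Hypothesis UA : uniform_algebra_between H.
Variable xss : (X -> C) -> C.

Lemma lim_bound (T : Type) (F : set_system T) (PF : ProperFilter F)
  (u : T -> C) (l M : C) :
  ((fun t => u t : Cn R) @ F --> (l : Cn R)) -> 0 <= M ->
  (forall t, `|u t| <= M) -> `|l| <= M.
Proof.
move=> /cvgrPdist_lt hc M0 hM.
have rl : `|l| \is Num.real by exact: normr_real.
have rM : M \is Num.real by exact: ger0_real.
rewrite real_leNgt //; apply/negP => lM.
have e0 : 0 < `|l| - M by rewrite subr_gt0.
have [t ht] := filter_ex (hc _ e0).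
have h := ler_normD (u t) (l - u t); rewrite [u t + _]addrC subrK in h.
have : `|l| < M + (`|l| - M) by apply: (le_lt_trans h); exact: ler_ltD (hM t) ht.
by rewrite addrC subrK ltxx.
Qed.

Lemma poly_cvg tau (Ftau : fiber H xss tau) (T : Type) (F : set_system T)
  (FF : Filter F) (x : T -> B) :
  (forall L, is_dual L -> (fun t => L (val (x t)) : Cn R) @ F --> (xss L : Cn R)) ->
  forall p, Defs.polyX p -> (fun t => p (x t) : Cn R) @ F --> (tau p : Cn R).
Proof.
case: Ftau => St hfib hL p.
elim=> [c|L dL|f g pf IHf pg IHg|f g pf IHf pg IHg].
- rewrite (tau_cst UA St); exact: cvg_cst.
- rewrite hfib //; exact: hL.
- rewrite (tau_add St (polyX_H UA pf) (polyX_H UA pg)); exact: (@cvgD (Cn R) (Cn R) _ _ _ _ _ _ _ IHf IHg).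
- rewrite (tau_mul St (polyX_H UA pf) (polyX_H UA pg)); exact: (@cvgM (Cn R) _ _ _ _ _ _ _ IHf IHg).
Qed.

End Forward.

Section Forward2.
Variables (R : realType) (X : completeNormedModType R[i]).
Local Notation C := (R[i]).
Local Notation B := (ball1 X).
Variable H : (B -> C) -> Prop.
Hypothesis UA : uniform_algebra_between H.
Variable xss : (X -> C) -> C.

Lemma H_sub f g : H f -> H g -> H (fun b => f b - g b).
Proof.
move=> Hf Hg; eapply H_ext; first exact: (H_lin UA (-1) Hg Hf).
by move=> b /=; rewrite mulN1r addrC.
Qed.

Lemma forward :
  (forall f, H f -> forall lam : C,
       cluster_set f xss lam <-> exists2 tau, fiber H xss tau & tau f = lam) ->
   (forall (n : nat) (fs : 'I_n -> B -> C) (fn : B -> C),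
       (forall i, AB (fs i)) -> H fn ->
       (exists2 delta : C, 0 < delta &
          forall b, delta <= \sum_(i < n) `|fs i b| + `|fn b|) ->
       ~ exists2 tau, fiber H xss tau &
           (forall i, tau (fs i) = 0) /\ tau fn = 0).
Proof.
move=> Hyp n fs fn ABfs Hfn [d d0 hd] [tau Ft [hfs hfn]].
have St : spectrum H tau by case: Ft.
have [I [le [x [dle [hL hfx]]]]] : cluster_set fn xss 0.
  by apply/(Hyp fn Hfn); exists tau.
pose F := tailF le; have PF : ProperFilter F := tailF_proper dle.
have cL : forall L, is_dual L ->
    (fun i => L (val (x i)) : Cn R) @ F --> (xss L : Cn R).
  by move=> L dL; apply/net_cvgP => //; exact: hL.
have cn : (fun i => fn (x i) : Cn R) @ F --> (0 : Cn R) by apply/net_cvgP.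
have bnd : forall g, H g -> forall M : C, 0 <= M -> (forall b, `|g b| <= M) ->
    `|tau g| <= M.
  move=> g Hg M M0 hM.
  have [J [leJ [y [dJ [_ hy]]]]] : cluster_set g xss (tau g).
    by apply/(Hyp g Hg); exists tau.
  have hc : (fun j => g (y j) : Cn R) @ tailF leJ --> (tau g : Cn R).
    exact/net_cvgP.
  have := lim_bound (tailF_proper dJ) hc.
  by apply => // t; exact: hM.
have cfs : forall j, (fun i => fs j (x i) : Cn R) @ F --> (0 : Cn R).
  move=> j; apply/cvgrPdist_lt => e e0.
  have e30 : 0 < e / 3 by rewrite divr_gt0.
  have [p pp hp] := ABfs j (e/3) e30.
  have Hp := polyX_H UA pp; have Hf := AB_H UA (ABfs j).
  have tp : `|tau p| <= e/3.
    have := bnd (fun b => p b - fs j b) (H_sub Hp Hf) (e/3) (ltW e30).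
    rewrite (tau_sub St Hp Hf) hfs subr0; apply => b; rewrite distrC; exact: hp.
  have hpc := poly_cvg UA Ft (@filter_filter _ _ PF) cL pp.
  move: hpc => /cvgrPdist_lt /(_ _ e30).
  apply: filterS => i hi.
  rewrite sub0r normrN.
  have e1 : fs j (x i) = (fs j (x i) - p (x i)) + ((p (x i) - tau p) + tau p).
    by rewrite subrK subrK.
  rewrite e1; apply: (le_lt_trans (ler_normD _ _)).
  apply: (le_lt_trans (lerD (lexx _) (ler_normD _ _))).
  have hB : `|p (x i) - tau p| + `|tau p| < e/3 + e/3.
    by rewrite distrC; exact: ltr_leD hi tp.
  have E : e/3 + (e/3 + e/3) = e by field.
  rewrite -[X in _ < X]E; exact: ler_ltD (hp (x i)) hB.
have dn0 : 0 < d / n.+1%:R by rewrite divr_gt0 // ltr0n.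
have hall : \forall i \near F, forall j : 'I_n, `|fs j (x i)| < d / n.+1%:R.
  apply: filter_forall => j; move: (cfs j) => /cvgrPdist_lt /(_ _ dn0).
  by apply: filterS => i; rewrite sub0r normrN.
have hn : \forall i \near F, `|fn (x i)| < d / n.+1%:R.
  move: cn => /cvgrPdist_lt /(_ _ dn0).
  by apply: filterS => i; rewrite sub0r normrN.
have [i [h1 h2]] := filter_ex (filterI hall hn).
have := hd (x i).
have hs : \sum_(j < n) `|fs j (x i)| <= \sum_(j < n) (d / n.+1%:R).
  by apply: ler_sum => j _; apply: ltW.
rewrite sumr_const card_ord in hs.
have := ler_ltD hs h2.
rewrite -mulrSr -(mulr_natr (d / n.+1%:R)) divfK ?pnatr_eq0 // => h3 h4.
by have := le_lt_trans h4 h3; rewrite ltxx.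
Qed.

End Forward2.

Section Ultra.
Variable R : realType.
Local Notation C := (R[i]).

Lemma ultra_lim_R (T : Type) (U : set_system T) (UU : UltraFilter U)
  (r : T -> R) (M : R) : (forall t, `|r t| <= M) -> exists a : R, r @ U --> a.
Proof.
move=> hM.
have PU : ProperFilter U := @ultra_proper _ _ UU.
have := @segment_compact R (- M) M (r @ U) _.
case=> [|p [_ clp]].
  change (U (r @^-1` `[- M, M])); apply: filterE => t /=.
  rewrite in_itv /= -ler_norml; exact: hM.
exists p => N /= Np.
have [//|hc] := in_ultra_setVsetC (r @^-1` N) UU.
have [t [/= h1 h2]] := clp (~` N) N hc Np.
by case: (h1 h2).
Qed.

Lemma normC_real (x : R) : `|x%:C| = `|x|%:C :> C.
Proof. by rewrite normc_def /= expr0n /= addr0 sqrtr_sqr. Qed.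

Lemma normC_le (z : C) : `|z| <= (`|complex.Re z| + `|complex.Im z|)%:C.
Proof.
rewrite {1}(complexE z) rmorphD.
apply: (le_trans (ler_normD _ _)).
rewrite normrM normC_real complexiE normCi mul1r normC_real.
by [].
Qed.

Lemma Re_le (z : C) : `|complex.Re z| <= complex.Re `|z|.
Proof.
have := normc_ge_Re z; rewrite lecE => /andP [_]; by [].
Qed.

Lemma Im_le (z : C) : `|complex.Im z| <= complex.Re `|z|.
Proof.
have := normc_ge_Re (z * 'i%C); rewrite ReiNIm normrN normrM complexiE normCi mulr1.
by rewrite lecE => /andP [_].
Qed.

Lemma ultra_lim_C (T : Type) (U : set_system T) (UU : UltraFilter U)
  (u : T -> C) (M : C) : (forall t, `|u t| <= M) ->
  exists l : C, (fun t => u t : Cn R) @ U --> (l : Cn R).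
Proof.
move=> hM.
have PU : ProperFilter U := @ultra_proper _ _ UU.
have hM' : forall t, complex.Re `|u t| <= complex.Re M.
  by move=> t; have := hM t; rewrite lecE => /andP [_].
have [a ha] := ultra_lim_R UU (r := fun t => complex.Re (u t)) (M := complex.Re M)
  (fun t => le_trans (Re_le _) (hM' t)).
have [b hb] := ultra_lim_R UU (r := fun t => complex.Im (u t)) (M := complex.Re M)
  (fun t => le_trans (Im_le _) (hM' t)).
exists (a +i* b); apply/cvgrPdist_lt => eps eps0.
have e0 : 0 < complex.Re eps / 2.
  by rewrite divr_gt0 //; move: eps0; rewrite ltcE => /andP [_].
move: ha => /cvgrPdist_lt /(_ _ e0) ha.
move: hb => /cvgrPdist_lt /(_ _ e0) hb.
apply: filterS (filterI ha hb) => t [h1 h2].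
apply: (le_lt_trans (normC_le _)).
have eE : eps = (complex.Re eps)%:C.
  by move: eps0; rewrite ltcE => /andP [/eqP h _]; case: (eps) h => x y /= ->.
rewrite [X in _ < X]eE ltcR.
have -> : complex.Re eps = complex.Re eps / 2 + complex.Re eps / 2 by rewrite -splitr.
move: h1 h2; case: (u t) => x y /= h1 h2; exact: ltrD h1 h2.
Qed.

End Ultra.

Section Backward1.
Variables (R : realType) (X : completeNormedModType R[i]).
Local Notation C := (R[i]).
Local Notation B := (ball1 X).
Variable H : (B -> C) -> Prop.
Hypothesis UA : uniform_algebra_between H.
Variable xss : (X -> C) -> C.

Lemma cl_sub f (Hf : H f) (lam : C) :
  cluster_set f xss lam -> exists2 tau, fiber H xss tau & tau f = lam.
Proof.
case=> I [le [x [dle [hL hf]]]].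
have PF := tailF_proper dle.
have [U [UU sFU]] := ultraFilterLemma PF.
have PU : ProperFilter U := @ultra_proper _ _ UU.
have FUf : Filter U := @filter_filter _ _ PU.
pose tau (g : B -> C) : C := lim ((fun i => g (x i) : Cn R) @ U).
have FU : forall (g : B -> C) (l : C), net_cvg le (fun i => g (x i)) l ->
    (fun i => g (x i) : Cn R) @ U --> (l : Cn R).
  move=> g l /(net_cvgP _ _ dle) hc N /hc; exact: sFU.
have ctau : forall g, H g -> (fun i => g (x i) : Cn R) @ U --> (tau g : Cn R).
  move=> g Hg; have [_ [M hM]] := H_Hinf UA Hg.
  have [l hl] := ultra_lim_C UU (u := fun i => g (x i)) (fun i => hM (x i)).
  by rewrite /tau (cvg_lim _ hl).
have etau : forall g (l : C), H g -> (fun i => g (x i) : Cn R) @ U --> (l : Cn R) ->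
    tau g = l.
  by move=> g l Hg hl; rewrite /tau (cvg_lim _ hl).
exists tau; last first.
  exact: (etau _ _ Hf (FU f _ hf)).
split; last first.
  move=> L dL; apply: (etau _ _ (H_dual UA dL)).
  exact: (FU (fun b => L (val b)) _ (hL L dL)).
split.
  move=> a g h Hg Hh; apply: (etau _ _ (H_lin UA a Hg Hh)).
  have K := (@cvgD (Cn R) (Cn R) _ _ _ _ _ _ _
    (@cvgM (Cn R) _ _ _ _ _ _ _ (@cvg_cst _ (a : Cn R) _ U _) (ctau _ Hg)) (ctau _ Hh)).
  exact (K FUf FUf FUf).
split.
  move=> g h Hg Hh; apply: (etau _ _ (H_mul UA Hg Hh)).
  have K := (@cvgM (Cn R) _ _ _ _ _ _ _ (ctau _ Hg) (ctau _ Hh)).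
  exact (K FUf).
exists (fun _ => 1); first exact: H_cst.
rewrite (etau _ 1) ?oner_neq0 //; first exact: H_cst.
exact: cvg_cst.
Qed.

End Backward1.

Section Backward2.
Variables (R : realType) (X : completeNormedModType R[i]).
Local Notation C := (R[i]).
Local Notation B := (ball1 X).
Variable H : (B -> C) -> Prop.
Hypothesis UA : uniform_algebra_between H.
Variable xss : (X -> C) -> C.

Fixpoint inl (L : X -> C) (s : seq (X -> C)) : Prop :=
  match s with [::] => False | L' :: s' => L' = L \/ inl L s' end.

Lemma inl_nth L s : inl L s -> exists j : 'I_(size s), nth (fun _ => 0) s j = L.
Proof.
elim: s => [//|L' s IH] /= [->|/IH [j hj]].
  by exists ord0.
by exists (lift ord0 j).
Qed.

Lemma inl_catl L s1 s2 : inl L s1 -> inl L (s1 ++ s2).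
Proof. by elim: s1 => [//|L' s IH] /= [->|/IH]; [left|right]. Qed.

Lemma inl_catr L s1 s2 : inl L s2 -> inl L (s1 ++ s2).
Proof. by elim: s1 => [//|L' s IH] /= h; right; apply: IH. Qed.

Lemma AB_polyX (p : B -> C) : Defs.polyX p -> AB p.
Proof.
move=> pp eps eps0; exists p => // b; rewrite subrr normr0; exact: ltW.
Qed.


Definition Idx := (seq (X -> C) * {e : C | 0 < e})%type.
Definition leI (i j : Idx) : Prop :=
  (forall L, inl L i.1 -> inl L j.1) /\ sval j.2 <= sval i.2.

Lemma dirI : directed leI.
Proof.
split; first by exists ([::], exist _ 1 ltr01).
split; first by move=> i; split => //.
split.
  move=> i j k [h1 h2] [h3 h4]; split; first by move=> L /h1 /h3.
  exact: le_trans h4 h2.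
move=> i j.
have ri : sval i.2 \is Num.real by apply: gtr0_real; case: i.2.
have rj : sval j.2 \is Num.real by apply: gtr0_real; case: j.2.
case/orP: (real_leVge ri rj) => hij.
  exists (i.1 ++ j.1, i.2); split; split => //=.
  - by move=> L; apply: inl_catl.
  - by move=> L; apply: inl_catr.
exists (i.1 ++ j.1, j.2); split; split => //=.
- by move=> L; apply: inl_catl.
- by move=> L; apply: inl_catr.
Qed.

Lemma cl_sup f (Hf : H f) (lam : C) :
  (forall (n : nat) (fs : 'I_n -> B -> C) (fn : B -> C),
       (forall i, AB (fs i)) -> H fn ->
       (exists2 delta : C, 0 < delta &
          forall b, delta <= \sum_(i < n) `|fs i b| + `|fn b|) ->
       ~ exists2 tau, fiber H xss tau &
           (forall i, tau (fs i) = 0) /\ tau fn = 0) ->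
  (exists2 tau, fiber H xss tau & tau f = lam) -> cluster_set f xss lam.
Proof.
move=> Cor [tau Ft tfl].
have St : spectrum H tau by case: Ft.
pose P (i : Idx) (b : B) :=
  (forall L, inl L i.1 -> is_dual L -> `|L (val b) - xss L| < sval i.2) /\
  `|f b - lam| < sval i.2.
case: (pselect (forall i, exists b, P i b)) => [hex|hnex].
  have [xb hxb] := choice hex.
  exists Idx, leI, xb; split; first exact: dirI.
  split.
    move=> L dL eps eps0; exists ([:: L], exist _ eps eps0) => i [h1 h2].
    have := (hxb i).1 L (h1 L (or_introl erefl)) dL.
    by move=> h; apply: (lt_le_trans h h2).
  move=> eps eps0; exists ([::], exist _ eps eps0) => i [h1 h2].
  exact: (lt_le_trans (hxb i).2 h2).
exfalso.
have [i hi] : exists i, ~ exists b, P i b.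
  apply: contrapT => h; apply: hnex => i; apply: contrapT => h'.
  by apply: h; exists i.
case: i hi => s [e e0] hi.
pose Ls (j : 'I_(size s)) := nth (fun _ => 0) s j.
pose fs (j : 'I_(size s)) : B -> C :=
  fun b => if `[< is_dual (Ls j) >] then Ls j (val b) - xss (Ls j) else 0.
pose fn : B -> C := fun b => f b - lam.
apply: (Cor (size s) fs fn).
- move=> j; apply: AB_polyX; rewrite /fs; case: asboolP => h.
    exact: (@polyX_add _ _ (fun b => Ls j (val b)) (fun _ => - xss (Ls j))
      (polyX_dual h) (polyX_cst _ _)).
  exact: polyX_cst.
- exact: (H_sub UA Hf (H_cst UA lam)).
- exists e => // b.
  have rs : \sum_(j < size s) `|fs j b| + `|fn b| \is Num.real.
    by apply: ger0_real; apply: addr_ge0; [apply: sumr_ge0 => j _|]; exact: normr_ge0.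
  rewrite real_leNgt //; last exact: gtr0_real.
  apply/negP => hlt; apply: hi; exists b; split => /=.
    move=> L hL dL; have [j hj] := inl_nth hL.
    have hfj : fs j b = L (val b) - xss L.
      by rewrite /fs; case: asboolP => //; rewrite /Ls hj.
    rewrite -hfj; apply: le_lt_trans hlt.
    have hs : `|fs j b| <= \sum_(k < size s) `|fs k b|.
      rewrite (bigD1 j) //= lerDl; apply: sumr_ge0 => k _; exact: normr_ge0.
    apply: (le_trans hs); rewrite lerDl; exact: normr_ge0.
  apply: le_lt_trans hlt; rewrite lerDr; apply: sumr_ge0 => k _; exact: normr_ge0.
exists tau => //; split.
  move=> j; rewrite /fs; case: asboolP => h.
    rewrite (tau_sub St (f := fun b => Ls j (val b)) (g := fun _ => xss (Ls j))
      (H_dual UA h) (H_cst UA _)).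
    by rewrite (tau_cst UA St) Ft.2 // subrr.
  exact (tau_cst UA St 0).
rewrite /fn (tau_sub St (f := f) (g := fun _ => lam) Hf (H_cst UA _)).
by rewrite (tau_cst UA St) tfl subrr.
Qed.

End Backward2.


Unset Implicit Arguments.

Theorem mainTheorem4 (R : realType) (X : completeNormedModType R[i])
    (H : (ball1 X -> R[i]) -> Prop) (xss : (X -> R[i]) -> R[i]) :
  uniform_algebra_between H -> in_bidual_ball xss ->
  ((forall f, H f -> forall lam : R[i],
       cluster_set f xss lam <-> exists2 tau, fiber H xss tau & tau f = lam)
   <->
   (forall (n : nat) (fs : 'I_n -> ball1 X -> R[i]) (fn : ball1 X -> R[i]),
       (forall i, AB (fs i)) -> H fn ->
       (exists2 delta : R[i], 0 < delta &
          forall b, delta <= \sum_(i < n) `|fs i b| + `|fn b|) ->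
       ~ exists2 tau, fiber H xss tau &
           (forall i, tau (fs i) = 0) /\ tau fn = 0)).
Proof.
move=> UA _; split.
  by move=> Hyp; exact: (forward UA Hyp).
move=> Cor f Hf lam; split.
  exact: (cl_sub UA Hf).
exact: (cl_sup UA Hf Cor).
Qed.
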